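(* Let $A$ be a finite group acting by automorphisms on a finite group $G$ such that $\Gamma(G,A)$ contains no triangle. Then for every nonidentity element $x\in G$ there is a prime $p$ such that the order of $x$ divides $p^2$.
   Context: $\Gamma(G,A)$ is the simple graph whose vertices are the $A$-orbits $x^A$ with $x\in G\setminus\{1\}$, two distinct vertices $\mathcal{O},\mathcal{O}'$ being adjacent iff there exist $x\in\mathcal{O}$, $y\in\mathcal{O}'$ with $xy=yx$. A triangle is a set of three distinct pairwise adjacent vertices. *)

(* Defs.v *)
From mathcomp Require Import all_boot all_fingroup.
Set Implicit Arguments. Unset Strict Implicit. Unset Printing Implicit Defensive.
Local Open Scope group_scope.

Section Gamma.
Variables (aT gT : finGroupType) (A : {group aT}) (G : {group gT}).
Variable to : groupAction A G.

Definition Gamma_vertices : {set {set gT}} := orbit to A @: G^#.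

Definition Gamma_adj (O O' : {set gT}) : Prop :=
  O != O' /\ exists x y, [/\ x \in O, y \in O' & commute x y].

Definition Gamma_has_triangle : Prop :=
  exists O1 O2 O3,
    [/\ O1 \in Gamma_vertices, O2 \in Gamma_vertices, O3 \in Gamma_vertices,
        Gamma_adj O1 O2 /\ Gamma_adj O1 O3 & Gamma_adj O2 O3].
End Gamma.

(* Main.v *)
Require Import Defs.
From mathcomp Require Import all_boot all_fingroup all_solvable.
Local Open Scope group_scope.

Lemma orbit_order (aT gT : finGroupType) (A : {group aT}) (G : {group gT})
    (to : groupAction A G) y z :
  y \in G -> z \in orbit to A y -> #[z] = #[y].
Proof.
move=> Gy /orbitP [g Ag <-].
rewrite -(actmE to Ag) order_injm //; exact: injm_actm.
Qed.

Theorem lemma5p1 (aT gT : finGroupType) (A : {group aT}) (G : {group gT})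
    (to : groupAction A G) :
  ~ Gamma_has_triangle to ->
  forall x, x \in G -> x != 1 ->
  exists p : nat, prime p /\ (#[x] %| p ^ 2)%N.
Proof.
move=> notri x Gx nx1.
set n := #[x].
have n1 : (1 < n)%N by rewrite /n order_gt1.
set p := pdiv n.
have pp : prime p := pdiv_prime n1.
have pn : (p %| n)%N := pdiv_dvd n.
have p1 : (1 < p)%N := prime_gt1 pp.
set m := (n %/ p)%N.
have nE : n = (m * p)%N by rewrite /m divnK.
case: (boolP (m == 1)%N) => [/eqP m1|m1].
  by exists p; split => //; rewrite nE m1 mul1n dvdn_mull.
case: (boolP (m == p)) => [/eqP mp|mp].
  by exists p; split => //; rewrite nE mp.
exfalso; apply: notri.
have m0 : (0 < m)%N by rewrite lt0n; apply/eqP => m0; move: n1; rewrite nE m0.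
have m1' : (1 < m)%N by rewrite ltn_neqAle eq_sym m1 m0.
have mn : (m < n)%N by rewrite nE -{1}(muln1 m) ltn_pmul2l.
have pn' : (p < n)%N by rewrite nE -{1}(mul1n p) ltn_pmul2r // ltnW.
set a := x ^+ m. set b := x ^+ p.
have oa : #[a] = p by rewrite /a orderXdiv -/n nE ?dvdn_mulr // mulKn.
have ob : #[b] = m by rewrite /b orderXdiv -/n nE ?dvdn_mull // mulnK // ltnW.
have Ga : a \in G by rewrite groupX.
have Gb : b \in G by rewrite groupX.
have vert : forall y, y \in G -> #[y] != 1%N -> orbit to A y \in Gamma_vertices to.
  move=> y Gy oy; apply: imset_f; rewrite !inE Gy andbT.
  by apply: contra oy => /eqP ->; rewrite order1.
have adj : forall y z, y \in G -> z \in G -> #[y] != #[z] -> commute y z ->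
    Gamma_adj (orbit to A y) (orbit to A z).
  move=> y z Gy Gz oyz cyz; split; last by exists y, z; rewrite !orbit_refl.
  apply: contra oyz => /eqP e.
  have := @orbit_refl _ _ _ to A z; rewrite -e => /(@orbit_order _ _ _ _ to _ _ Gy) ->. by [].
exists (orbit to A a), (orbit to A b), (orbit to A x); split.
- by apply: vert; rewrite // oa neq_ltn p1 orbT.
- by apply: vert; rewrite // ob neq_ltn m1' orbT.
- by apply: vert; rewrite // -/n neq_ltn n1 orbT.
- split; apply: adj => //.
  + by rewrite oa ob eq_sym.
  + exact: commuteX2.
  + by rewrite oa -/n neq_ltn pn'.
  + by rewrite /a -{2}(expg1 x); apply: commuteX2.
- apply: adj => //.
  + by rewrite ob -/n neq_ltn mn.
  + by rewrite /b -{2}(expg1 x); apply: commuteX2.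
Qed.
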